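(* For all $n\ge1$ and $k\ge0$, the map sending a word $x_n\cdots x_1\in L_{\mathrm{Rect}}$ to $\psi_{x_n}\circ\cdots\circ\psi_{x_1}(e_0)$ restricts to a bijection from the set of words in $L_{\mathrm{Rect}}$ of length $n$ containing exactly $k$ occurrences of the letter $d$ onto the set of rectangular permutations in $S_n$ with exactly $k$ recoils.
   Context: A permutation is rectangular if it avoids $2413,2431,4213,4231$; a recoil of $\pi\in S_n$ is $i\in\{1,\dots,n-1\}$ with $\pi^{-1}_i>\pi^{-1}_{i+1}$; $e_0$ is the empty permutation. For $\pi\in S_n$ (one-line form) and $1\le i,j\le n+1$, $\rho_{i,j}(\pi)\in S_{n+1}$ is obtained by increasing by $1$ every entry $\ge i$ and inserting the value $i$ at position $j$. Operators: $\psi_1=\rho_{1,1}$, domain all rectangular permutations (including $e_0$); $\psi_2=\rho_{1,2}$, domain rectangular $\pi$ of size $\ge1$ with $\pi_1\ne1$; $\psi_u(\pi)=\rho_{\pi_1,1}(\pi)$, same domain as $\psi_2$; $\psi_d(\pi)=\rho_{\pi_1+1,1}(\pi)$, domain rectangular $\pi$ of size $\ge1$. A word $x_m\cdots x_1$ over $\{1,2,u,d\}$ stands for $\psi_{x_m}\circ\cdots\circ\psi_{x_1}$ (rightmost applied first); $L_{\mathrm{Rect}}$ is the set of words of length $m\ge1$ for which this composition applied to $e_0$ is defined (each operator applied within its domain). *)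

(* Defs.v *)
(* Permutations of size n are one-line sequences of nat
   (values 1..n); the empty permutation e_0 is [::]. *)
From mathcomp Require Import all_boot.
Set Implicit Arguments. Unset Strict Implicit. Unset Printing Implicit Defensive.

Fixpoint subseqs (s : seq nat) : seq (seq nat) :=
  match s with
  | [::] => [:: [::]]
  | x :: s' => let r := subseqs s' in map (cons x) r ++ r
  end.

Definition order_iso (s q : seq nat) : bool :=
  (size s == size q) &&
  all (fun i => all (fun j => (nth 0 s i < nth 0 s j) == (nth 0 q i < nth 0 q j))
                    (iota 0 (size q))) (iota 0 (size q)).

Definition contains (p q : seq nat) : bool := has (fun s => order_iso s q) (subseqs p).

Definition rectangular (p : seq nat) : bool :=
  [&& ~~ contains p [:: 2; 4; 1; 3], ~~ contains p [:: 2; 4; 3; 1],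
      ~~ contains p [:: 4; 2; 1; 3] & ~~ contains p [:: 4; 2; 3; 1]].

Definition is_perm (n : nat) (p : seq nat) : Prop := perm_eq p (iota 1 n).

Definition recoils (p : seq nat) : nat :=
  count (fun i => index i.+1 p < index i p) (iota 1 (size p).-1).

(* rho_{i,j}: increment entries >= i, insert value i at (1-based) position j *)
Definition rho (i j : nat) (p : seq nat) : seq nat :=
  let s := map (fun x => if i <= x then x.+1 else x) p in
  take j.-1 s ++ i :: drop j.-1 s.

Inductive letter := L1 | L2 | Lu | Ld.

Definition is_d (x : letter) : bool := if x is Ld then true else false.

Definition psi (x : letter) (p : seq nat) : option (seq nat) :=
  if ~~ rectangular p then None else
  match x with
  | L1 => Some (rho 1 1 p)
  | L2 => if (0 < size p) && (head 0 p != 1) then Some (rho 1 2 p) else None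
  | Lu => if (0 < size p) && (head 0 p != 1) then Some (rho (head 0 p) 1 p) else None
  | Ld => if 0 < size p then Some (rho (head 0 p).+1 1 p) else None
  end.

(* A word x_m ... x_1 is the list [:: x_m; ...; x_1]; x_1 is applied first
   to e_0 = [::]. *)
Fixpoint eval_word (w : seq letter) : option (seq nat) :=
  match w with
  | [::] => Some [::]
  | x :: w' => match eval_word w' with Some p => psi x p | None => None end
  end.

Definition in_LRect (w : seq letter) : Prop :=
  0 < size w /\ exists p, eval_word w = Some p.

(* Main.v *)
Require Import Defs.
From mathcomp Require Import all_boot zify.
Set Implicit Arguments. Unset Strict Implicit. Unset Printing Implicit Defensive.

Definition sh (i x : nat) := if i <= x then x.+1 else x.
Definition gg (i x : nat) := if i < x then x.-1 else x.

Lemma sh_lt i u v : (sh i u < sh i v) = (u < v).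
Proof. rewrite /sh; case: (leqP i u); case: (leqP i v); lia. Qed.
Lemma sh_inj i : injective (sh i).
Proof. move=> u v; rewrite /sh; case: (leqP i u); case: (leqP i v); lia. Qed.
Lemma sh_gg i v : v != i -> sh i (gg i v) = v.
Proof. rewrite /sh /gg; case: (ltnP i v) => H1 H2; case: leqP; lia. Qed.
Lemma sh_neq i v : sh i v != i.
Proof. rewrite /sh; case: leqP; lia. Qed.

Lemma rho1 i p : rho i 1 p = i :: map (sh i) p.
Proof. by rewrite /rho take0 drop0. Qed.
Lemma rho2 i a t : rho i 2 (a :: t) = sh i a :: i :: map (sh i) t.
Proof. by rewrite /rho /= take0 drop0. Qed.

Definition pm n p := uniq p /\ forall v, (v \in p) = (0 < v <= n).

Lemma is_permP n p : is_perm n p <-> pm n p.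
Proof.
split.
- move=> H; split; first by rewrite (perm_uniq H) iota_uniq.
  move=> v; rewrite (perm_mem H) mem_iota; lia.
- case=> U M; apply: uniq_perm => //; first exact: iota_uniq.
  move=> v; rewrite M mem_iota; lia.
Qed.

Lemma pm_size n p : pm n p -> size p = n.
Proof.
case=> U M. have : perm_eq p (iota 1 n).
  apply: uniq_perm => //; first exact: iota_uniq. move=> v; rewrite M mem_iota; lia.
by move/perm_size; rewrite size_iota.
Qed.

Lemma pm_perm n p q : perm_eq p q -> pm n p -> pm n q.
Proof. move=> H [U M]; split; first by rewrite -(perm_uniq H). by move=> v; rewrite -(perm_mem H). Qed.

Lemma pm_ins n p i : pm n p -> 0 < i <= n.+1 -> pm n.+1 (i :: map (sh i) p).
Proof.
case=> U M Hi; split.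
- rewrite /= map_inj_uniq ?U ?andbT; last exact: sh_inj.
  apply/mapP => -[x _ E]; move: (sh_neq i x); by rewrite -E eqxx.
- move=> v; rewrite inE; case: eqP => [->|/eqP Hv] /=; first lia.
  apply/mapP/idP.
  + case=> x; rewrite M /sh => Hx ->; case: (leqP i x); lia.
  + move=> H; exists (gg i v); last by rewrite sh_gg.
    rewrite M /gg; case: (ltnP i v); lia.
Qed.

Lemma pm_del n i s : pm n.+1 (i :: s) -> pm n (map (gg i) s).
Proof.
case=> /= /andP [Ni U] M; split.
- rewrite map_inj_in_uniq // => x y Hx Hy E.
  have Hxi : x != i by apply: contraNneq Ni => <-.
  have Hyi : y != i by apply: contraNneq Ni => <-.
  by rewrite -(sh_gg Hxi) -(sh_gg Hyi) E.
- have Hi : i \in i :: s by rewrite inE eqxx.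
  rewrite M in Hi.
  move=> v; apply/mapP/idP.
  + case=> x Hx ->.
    have Hxi : x != i by apply: contraNneq Ni => <-.
    have : x \in i :: s by rewrite inE Hx orbT.
    rewrite M /gg; case: (ltnP i x); lia.
  + move=> H.
    case: (ltnP v i) => Hvi.
    * exists v; last by rewrite /gg; case: (ltnP i v); lia.
      have : v \in i :: s by rewrite M; lia.
      rewrite inE; case: eqP => //; lia.
    * exists v.+1; last by rewrite /gg; case: (ltnP i v.+1); lia.
      have : v.+1 \in i :: s by rewrite M; lia.
      rewrite inE; case: eqP => //; lia.
Qed.

Fixpoint rc (s : seq nat) : nat :=
  if s is x :: s' then ((1 < x) && (x.-1 \in s')) + rc s' else 0.

Lemma count_or_disj (T : Type) (a b : pred T) l :
  (forall t, ~~ (a t && b t)) -> count (fun t => a t || b t) l = count a l + count b l.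
Proof.
move=> H; elim: l => //= t l ->; move: (H t).
case: (a t); case: (b t) => //= _; lia.
Qed.

Lemma G_rc M s : uniq s -> (forall v, v \in s -> v <= M.+1) ->
  count (fun t => (t \in s) && (index t.+1 s < index t s)) (iota 1 M) = rc s.
Proof.
elim: s => [|x s IH] /=.
  by move=> _ _; rewrite (eq_count (a2 := pred0)) ?count_pred0.
case/andP=> Nx U B.
have B' : forall v, v \in s -> v <= M.+1 by move=> v Hv; apply: B; rewrite inE Hv orbT.
rewrite -(IH U B').
have Hx : x <= M.+1 by apply: B; rewrite inE eqxx.
rewrite [LHS](eq_count (a2 := fun t => ((t \in s) && (index t.+1 s < index t s)) || ((t.+1 == x) && (t \in s)))).
- rewrite count_or_disj; last first.
    move=> t; apply/negP => /andP [/andP [Ht Hi] /andP [/eqP Ex _]].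
    move: Nx Hi; rewrite -Ex => Nx; rewrite (memNindex Nx) ltnNge.
    by rewrite (ltnW (_ : index t s < size s)) // index_mem.
  rewrite addnC; congr (_ + _).
  case: (boolP (x.-1 \in s)) => Hm; last first.
    rewrite andbF (eq_in_count (a2 := pred0)) ?count_pred0 //.
    move=> t _ /=; apply/negP => /andP [/eqP Ex Ht]; move: Hm; by rewrite -Ex /= Ht.
  case: (ltnP 1 x) => H1 /=.
  + rewrite (eq_in_count (a2 := pred1 x.-1)).
      rewrite count_uniq_mem ?iota_uniq // mem_iota; lia.
    move=> t _ /=; apply/andP/eqP.
    * case=> /eqP <- _; lia.
    * move=> ->; split; [apply/eqP; lia | done].
  + rewrite (eq_in_count (a2 := pred0)) ?count_pred0 //.
    move=> t; rewrite mem_iota => Ht /=; apply/negP => /andP [/eqP Ex _]; lia.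
- move=> t /=; rewrite inE.
  case: (eqVneq t x) => [->|Htx] /=.
    by rewrite ltn0 (negbTE Nx) !andbF.
  case: (eqVneq x t.+1) => [Ex|Hx1] /=.
  by rewrite ltn0Sn andbT; case: (t \in s); rewrite ?andbF ?orbT.
  by rewrite ltnS orbF.
Qed.

Lemma recoils_rc n p : pm n p -> recoils p = rc p.
Proof.
move=> H; have Hs := pm_size H; case: H => U M.
rewrite /recoils -(G_rc (M := (size p).-1)) //.
- apply: eq_in_count => t; rewrite mem_iota M => Ht; apply/idP/idP.
  + move=> ->; rewrite andbT; move: Ht; rewrite -subn1; have Hs2 : @size nat p = n := Hs; lia.
  + by case/andP.
- move=> v; rewrite M Hs -subn1; lia.
Qed.

Lemma mem_map_sh i u s : (sh i u \in map (sh i) s) = (u \in s).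
Proof. exact: (mem_map (@sh_inj i)). Qed.

Lemma i_notin_map_sh i s : (i \in map (sh i) s) = false.
Proof. apply/negbTE/mapP => -[x _ E]; move: (sh_neq i x); by rewrite -E eqxx. Qed.

Lemma rc_map_sh i s : 0 < i -> ~~ [&& 1 < i, i \in s & i.-1 \in s] ->
  rc (map (sh i) s) = rc s.
Proof.
move=> Hi; elim: s => //= x s IH C.
rewrite IH; last first.
  apply: contra C => /and3P [-> H1 H2]; by rewrite !inE H1 H2 !orbT.
congr (_ + _).
case: (ltngtP x i) => Hx.
- have E1 : sh i x = x by rewrite /sh leqNgt Hx.
  have E2 : x.-1 = sh i x.-1 by rewrite /sh leqNgt (_ : x.-1 < i) //; lia.
  by rewrite E1 {1}E2 mem_map_sh.
- have E1 : sh i x = x.+1 by rewrite /sh ltnW.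
  have E2 : x = sh i x.-1 by rewrite /sh (_ : i <= x.-1) //; lia.
  rewrite E1 /=.
  have -> : (x \in map (sh i) s) = (x.-1 \in s) by rewrite {1}E2 mem_map_sh.
  congr (_ && _); lia.
- subst x; rewrite /sh leqnn /= i_notin_map_sh andbF.
  case E: (_ && _) => //; move: C; case/andP: E => H1 H2; by rewrite H1 !inE eqxx H2 orbT.
Qed.

Lemma rc_psi x p q n : pm n p -> psi x p = Some q -> rc q = rc p + is_d x.
Proof.
case=> U M; rewrite /psi; case: (rectangular p) => //=.
have H0 : 0 \notin p by rewrite M.
case: x => //=.
- case=> <-; rewrite rho1 /= addn0 rc_map_sh //.
- case: p U M H0 => //= a t /andP [Na U] M H0.
  rewrite !inE negb_or in H0; case/andP: H0 => Ha0 H0.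
  case: ifP => //= /eqP Ha1 [<-]; rewrite rho2 /= addn0 rc_map_sh //.
  congr (_ + _); rewrite inE.
  have E1 : sh 1 a = a.+1 by rewrite /sh; case: leqP; lia.
  have E2 : a = sh 1 a.-1 by rewrite /sh; case: leqP; lia.
  rewrite E1 /= (_ : (a == 1) = false); last by apply/eqP.
  have -> : (a \in map (sh 1) t) = (a.-1 \in t) by rewrite {1}E2 mem_map_sh.
  congr (_ && _); lia.
- case: p U M H0 => //= a t /andP [Na U] M H0.
  rewrite !inE negb_or in H0; case/andP: H0 => Ha0 H0.
  case: ifP => //= /eqP Ha1 [<-]; rewrite rho1 /= addn0.
  have Eaa : sh a a = a.+1 by rewrite /sh leqnn.
  rewrite Eaa /= i_notin_map_sh andbF add0n rc_map_sh; last 2 first.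
  - lia.
  - by rewrite (negbTE Na) andbF.
  have E2 : a.-1 = sh a a.-1 by rewrite /sh; case: leqP; lia.
  rewrite inE (_ : (a.-1 == a.+1) = false); last by apply/eqP; lia.
  by rewrite /= {1}E2 mem_map_sh.
- case: p U M H0 => //= a t /andP [Na U] M H0.
  rewrite !inE negb_or in H0; case/andP: H0 => Ha0 H0.
  case=> <-; rewrite rho1 /=.
  have Eaa : sh a.+1 a = a by rewrite /sh ltnn.
  rewrite Eaa /= rc_map_sh //; last by apply/negP => /and3P [_ _]; rewrite /= (negbTE Na).
  rewrite inE eqxx orTb andbT.
  have E2 : a.-1 = sh a.+1 a.-1 by rewrite /sh; case: leqP; lia.
  rewrite {1}E2 mem_map_sh (_ : 1 < a.+1); last lia.
  rewrite /=; lia.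
Qed.

Definition forb (w x y z : nat) : bool :=
  [|| [&& y < w, w < z & z < x], [&& z < w, w < y & y < x],
      [&& y < x, x < z & z < w] | [&& z < x, x < y & y < w]].

Definition RR (p : seq nat) := forall w x y z, subseq [:: w; x; y; z] p -> ~~ forb w x y z.

Lemma mem_subseqs s p : (s \in subseqs p) = subseq s p.
Proof.
elim: p s => [|x p IH] s /=.
  by rewrite inE; case: s.
rewrite mem_cat IH; case: s => [|y s] /=.
  rewrite sub0seq orbT; done.
case: (eqVneq y x) => [->|Hyx].
- rewrite (mem_map (fun a b (E : x :: a = x :: b) => (congr1 behead E))) IH.
  apply/orP/idP; [case=> //|by left].
  move=> H; apply: subseq_trans H; exact: subseq_cons.
- rewrite (_ : (y :: s \in _) = false) //; apply/negbTE/mapP => -[s' _ [E _]].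
  by rewrite E eqxx in Hyx.
Qed.

Lemma order_isoP s q : order_iso s q -> size s = size q /\
  forall i j, i < size q -> j < size q -> (nth 0 s i < nth 0 s j) = (nth 0 q i < nth 0 q j).
Proof.
case/andP => /eqP -> /allP H; split => // i j Hi Hj.
have := H i; rewrite mem_iota /= => /(_ Hi) /allP /(_ j).
by rewrite mem_iota /= => /(_ Hj) /eqP.
Qed.

Lemma order_isoI s q : size s = size q ->
  (forall i j, i < size q -> j < size q -> (nth 0 s i < nth 0 s j) = (nth 0 q i < nth 0 q j)) ->
  order_iso s q.
Proof.
move=> Hs H; rewrite /order_iso Hs eqxx /=; apply/allP => i; rewrite mem_iota /= => Hi.
apply/allP => j; rewrite mem_iota /= => Hj; apply/eqP; exact: H.
Qed.

Lemma rect_R p : rectangular p -> RR p.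
Proof.
case/and4P => H1 H2 H3 H4 w x y z Hs; apply/negP => Hf.
have Hin : [:: w; x; y; z] \in subseqs p by rewrite mem_subseqs.
have K : forall q, ~~ contains p q -> order_iso [:: w; x; y; z] q -> False.
  move=> q Hq Hi; move/negP: Hq; apply; apply/hasP; by exists [:: w; x; y; z].
move: Hf; rewrite /forb => /or4P [] Hf.
- apply: (K _ H1); apply: order_isoI => //.
  move=> [|[|[|[|i]]]] [|[|[|[|j]]]] Hi Hj //=; lia.
- apply: (K _ H2); apply: order_isoI => //.
  move=> [|[|[|[|i]]]] [|[|[|[|j]]]] Hi Hj //=; lia.
- apply: (K _ H3); apply: order_isoI => //.
  move=> [|[|[|[|i]]]] [|[|[|[|j]]]] Hi Hj //=; lia.
- apply: (K _ H4); apply: order_isoI => //.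
  move=> [|[|[|[|i]]]] [|[|[|[|j]]]] Hi Hj //=; lia.
Qed.

Lemma R_rect p : RR p -> rectangular p.
Proof.
move=> HR.
have K : forall q, size q = 4 ->
   (forall w x y z, order_iso [:: w; x; y; z] q -> forb w x y z) -> ~~ contains p q.
  move=> q Hq Hf; apply/hasPn => s; rewrite mem_subseqs => Hs; apply/negP => Hi.
  have [Hsz _] := order_isoP Hi.
  move: Hs Hi Hsz; case: s => [|w [|x [|y [|z [|? ?]]]]] //; rewrite Hq //.
  move=> Hs Hi _; move/negP: (HR _ _ _ _ Hs); apply; exact: Hf.
apply/and4P; split; apply: K => // w x y z /order_isoP [_ H];
  move: (H 0 1 erefl erefl) (H 0 2 erefl erefl) (H 0 3 erefl erefl)
        (H 1 2 erefl erefl) (H 1 3 erefl erefl) (H 2 3 erefl erefl)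
        (H 1 0 erefl erefl) (H 2 0 erefl erefl) (H 3 0 erefl erefl)
        (H 2 1 erefl erefl) (H 3 1 erefl erefl) (H 3 2 erefl erefl) => /=;
  rewrite /forb; lia.
Qed.

Lemma subseq_cons2 (w c : nat) s t : subseq (w :: s) (c :: t) ->
  (w = c /\ subseq s t) \/ subseq (w :: s) t.
Proof. rewrite /=; case: eqP => [->|_]; [by left | by right]. Qed.

Lemma subseq_map_inv (f : nat -> nat) s t : subseq s (map f t) ->
  exists s', s = map f s' /\ subseq s' t.
Proof.
case/subseqP => m Hm ->; exists (mask m t); rewrite map_mask; split => //.
exact: mask_subseq.
Qed.

Definition mono (f : nat -> nat) := forall u v, (f u < f v) = (u < v).

Lemma forb_map f w x y z : mono f -> forb (f w) (f x) (f y) (f z) = forb w x y z.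
Proof. by move=> Hf; rewrite /forb !Hf. Qed.

Lemma Rmap f p w x y z : RR p -> mono f -> subseq [:: w; x; y; z] (map f p) -> ~~ forb w x y z.
Proof.
move=> HR Hf /subseq_map_inv [s' [E Hs]].
move: E Hs; case: s' => [|w' [|x' [|y' [|z' [|? ?]]]]] //= [-> -> -> ->] Hs.
by rewrite forb_map //; apply: HR.
Qed.

Lemma Rsub f p s : RR s -> mono f -> subseq (map f p) s -> RR p.
Proof.
move=> HR Hf Hsub w x y z Hs; rewrite -(forb_map _ _ _ _ Hf); apply: HR.
apply: subseq_trans Hsub; exact: (map_subseq f Hs).
Qed.

Lemma mono_sh i : mono (sh i).
Proof. move=> u v; exact: sh_lt. Qed.

Lemma sh_pos i p v : 0 \notin p -> v \in map (sh i) p -> 0 < v.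
Proof. move=> H0 /mapP [u Hu ->]; have : u != 0 by apply: contraNneq H0 => <-.
rewrite /sh; case: (leqP i u); lia. Qed.

Lemma R_psi1 p : RR p -> 0 \notin p -> RR (1 :: map (sh 1) p).
Proof.
move=> HR H0 w x y z /subseq_cons2 [[-> Hs]|Hs]; last exact: Rmap (mono_sh 1) Hs.
have Hy : 0 < y by apply: (sh_pos H0); apply: (mem_subseq Hs); rewrite !inE eqxx ?orbT.
have Hz : 0 < z by apply: (sh_pos H0); apply: (mem_subseq Hs); rewrite !inE eqxx ?orbT.
rewrite /forb; lia.
Qed.

Lemma R_psi2 a t : RR (a :: t) -> 0 \notin a :: t -> RR (sh 1 a :: 1 :: map (sh 1) t).
Proof.
move=> HR H0; have H0' : 0 \notin t by apply: contra H0; rewrite inE => ->; rewrite orbT.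
move=> w x y z /subseq_cons2 [[-> Hs]|Hs].
- case/subseq_cons2: Hs => [[-> Hs]|Hs].
  + have Hy : 0 < y by apply: (sh_pos H0'); apply: (mem_subseq Hs); rewrite !inE eqxx ?orbT.
    have Hz : 0 < z by apply: (sh_pos H0'); apply: (mem_subseq Hs); rewrite !inE eqxx ?orbT.
    rewrite /forb; lia.
  + apply: (Rmap (p := a :: t)) (mono_sh 1) _ => //=; by rewrite eqxx.
- case/subseq_cons2: Hs => [[-> Hs]|Hs].
  + have Hy : 0 < y by apply: (sh_pos H0'); apply: (mem_subseq Hs); rewrite !inE eqxx ?orbT.
    have Hz : 0 < z by apply: (sh_pos H0'); apply: (mem_subseq Hs); rewrite !inE eqxx ?orbT.
    rewrite /forb; lia.
  + exact: (Rmap (p := a :: t)) (mono_sh 1) (subseq_trans Hs (subseq_cons _ _)).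
Qed.

Lemma R_adj f a t c : RR (a :: t) -> mono f -> (c = (f a).+1 \/ f a = c.+1) ->
  c \notin map f t -> f a \notin map f t -> RR (c :: map f (a :: t)).
Proof.
move=> HR Hf Hc Nc Na w x y z /subseq_cons2 [[-> Hs]|Hs]; last exact: Rmap Hf Hs.
case/subseq_cons2: Hs => [[-> Hs]|Hs]; first by rewrite /forb; lia.
have Hx : x \in map f t by apply: (mem_subseq Hs); rewrite !inE eqxx.
have Hy : y \in map f t by apply: (mem_subseq Hs); rewrite !inE eqxx ?orbT.
have Hz : z \in map f t by apply: (mem_subseq Hs); rewrite !inE eqxx ?orbT.
have Hxa : x != f a by apply: contraNneq Na => <-.
have Hya : y != f a by apply: contraNneq Na => <-.
have Hza : z != f a by apply: contraNneq Na => <-.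
have Hxc : x != c by apply: contraNneq Nc => <-.
have Hyc : y != c by apply: contraNneq Nc => <-.
have Hzc : z != c by apply: contraNneq Nc => <-.
have K := Rmap (w := f a) (x := x) (y := y) (z := z) HR Hf.
have Hs' : subseq [:: f a; x; y; z] (map f (a :: t)) by rewrite /= eqxx.
move: (K Hs'); rewrite /forb; lia.
Qed.

Lemma perm_swap2 (x y : nat) s : perm_eq (x :: y :: s) (y :: x :: s).
Proof. apply/permP => P /=; by rewrite addnCA. Qed.

Lemma pm_psi x p q n : pm n p -> psi x p = Some q -> pm n.+1 q.
Proof.
move=> H; have [U M] := H; rewrite /psi; case: (rectangular p) => //=.
case: x => /=.
- case=> <-; rewrite rho1; apply: pm_ins => //.
- case: p H U M => //= a t H U M; case: ifP => //= /eqP Ha1 [<-]; rewrite rho2.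
  apply: (pm_perm (perm_swap2 _ _ _)); exact: (pm_ins H).
- case: p H U M => //= a t H U M; case: ifP => //= /eqP Ha1 [<-]; rewrite rho1.
  apply: (pm_ins H); move: (M a); rewrite inE eqxx /= => E; move: E; lia.
- case: p H U M => //= a t H U M [<-]; rewrite rho1.
  apply: (pm_ins H); move: (M a); rewrite inE eqxx /= => E; move: E; lia.
Qed.

Lemma rect_psi x p q n : pm n p -> psi x p = Some q -> rectangular q.
Proof.
case=> U M; rewrite /psi; case E: (rectangular p) => //=.
have HR := rect_R E; have H0 : 0 \notin p by rewrite M.
move=> Hq; apply: R_rect; move: Hq.
case: x => /=.
- case=> <-; rewrite rho1; exact: R_psi1.
- case: p U M H0 HR {E} => //= a t U M H0 HR; case: ifP => //= /eqP Ha1 [<-]; rewrite rho2.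
  exact: R_psi2.
- case: p U M H0 HR {E} => //= a t /andP [Na U] M H0 HR; case: ifP => //= /eqP Ha1 [<-]; rewrite rho1.
  apply: R_adj => //.
  + exact: mono_sh.
  + by right; rewrite /sh leqnn.
  + by rewrite i_notin_map_sh.
  + by rewrite mem_map_sh.
- case: p U M H0 HR {E} => //= a t /andP [Na U] M H0 HR [<-]; rewrite rho1.
  apply: R_adj => //.
  + exact: mono_sh.
  + by left; rewrite /sh ltnn.
  + by rewrite i_notin_map_sh.
  + by rewrite mem_map_sh.
Qed.

Lemma psi_shape x p s : 0 \notin p -> psi x p = Some s ->
  match x with
  | L1 => s = 1 :: map (sh 1) p
  | L2 => exists a t, [/\ p = a :: t, 1 < a & s = a.+1 :: 1 :: map (sh 1) t]
  | Lu => exists a t, [/\ p = a :: t, 1 < a & s = a :: a.+1 :: map (sh a) t]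
  | Ld => exists a t, [/\ p = a :: t, 0 < a & s = a.+1 :: a :: map (sh a.+1) t]
  end.
Proof.
move=> H0; rewrite /psi; case: (rectangular p) => //=.
case: x.
- by case=> <-; rewrite rho1.
- case: p H0 => //= a t; rewrite inE negb_or => /andP [Ha _].
  case: ifP => //= /eqP Ha1 [<-]; exists a, t; split => //; first lia.
  by rewrite rho2 /sh (_ : 1 <= a) //; lia.
- case: p H0 => //= a t; rewrite inE negb_or => /andP [Ha _].
  case: ifP => //= /eqP Ha1 [<-]; exists a, t; split => //; first lia.
  by rewrite rho1 /= (_ : sh a a = a.+1) // /sh leqnn.
- case: p H0 => //= a t; rewrite inE negb_or => /andP [Ha _].
  case=> <-; exists a, t; split => //; first lia.
  by rewrite rho1 /= (_ : sh a.+1 a = a) // /sh ltnn.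
Qed.

Lemma psi_inj x y p1 p2 s : 0 \notin p1 -> 0 \notin p2 ->
  psi x p1 = Some s -> psi y p2 = Some s -> x = y /\ p1 = p2.
Proof.
move=> N1 N2 E1 E2.
have S1 := psi_shape N1 E1; have S2 := psi_shape N2 E2.
have I1 := @inj_map _ _ _ (@sh_inj 1).
case: x S1 {E1}; case: y S2 {E2} => /=.
- move=> -> E; case: E => /I1 ->; by [].
- move=> [a [t [_ Ha ->]]] E; case: E => *; lia.
- move=> [a [t [_ Ha ->]]] E; case: E => *; lia.
- move=> [a [t [_ Ha ->]]] E; case: E => *; lia.
- move=> -> [a [t [_ Ha E]]]; case: E => *; lia.
- move=> [a [t [-> Ha ->]]] [a' [t' [-> Ha' E]]]; case: E => Ea /I1 ->; by rewrite Ea.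
- move=> [a [t [_ Ha ->]]] [a' [t' [_ Ha' E]]]; case: E => *; lia.
- move=> [a [t [_ Ha ->]]] [a' [t' [_ Ha' E]]]; case: E => *; lia.
- move=> -> [a [t [_ Ha E]]]; case: E => *; lia.
- move=> [a [t [_ Ha ->]]] [a' [t' [_ Ha' E]]]; case: E => *; lia.
- move=> [a [t [-> Ha ->]]] [a' [t' [-> Ha' E]]]; case: E => Ea _; subst a'.
  have Ia := @inj_map _ _ _ (@sh_inj a); by move/Ia => ->.
- move=> [a [t [_ Ha ->]]] [a' [t' [_ Ha' E]]]; case: E => *; lia.
- move=> -> [a [t [_ Ha E]]]; case: E => *; lia.
- move=> [a [t [_ Ha ->]]] [a' [t' [_ Ha' E]]]; case: E => *; lia.
- move=> [a [t [_ Ha ->]]] [a' [t' [_ Ha' E]]]; case: E => *; lia.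
- move=> [a [t [-> Ha ->]]] [a' [t' [-> Ha' E]]]; case: E => Ea _; subst a'.
  have Ia := @inj_map _ _ _ (@sh_inj a.+1); by move/Ia => ->.
Qed.

Lemma map_sh_gg i s : i \notin s -> map (sh i) (map (gg i) s) = s.
Proof.
move=> N; rewrite -map_comp -[RHS]map_id; apply/eq_in_map => v Hv /=.
apply: sh_gg; by apply: contraNneq N => <-.
Qed.

Lemma two_subseq (x y : nat) s : x \in s -> y \in s -> x != y ->
  subseq [:: x; y] s \/ subseq [:: y; x] s.
Proof.
elim: s => [|u s IH] //; rewrite !inE => Hx Hy Hxy.
case: (eqVneq x u) => [Exu|Nxu].
- subst u; left; rewrite /= eqxx sub1seq.
  move: Hy; rewrite eq_sym (negbTE Hxy) //.
- case: (eqVneq y u) => [Eyu|Nyu].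
  + subst u; right; rewrite /= eqxx sub1seq.
    by move: Hx; rewrite (negbTE Nxu).
  + move: Hx Hy; rewrite (negbTE Nxu) (negbTE Nyu) !orFb => Hx Hy.
    case: (IH Hx Hy Hxy) => H; [left|right]; apply: subseq_trans H _; exact: subseq_cons.
Qed.

Lemma decomp n s : pm n.+2 s -> rectangular s ->
  exists x p, [/\ pm n.+1 p, rectangular p & psi x p = Some s].
Proof.
move=> H Hr; have Hs := pm_size H; have [U M] := H.
case: s H Hs U M Hr => [|a [|b r]] // H _ U M Hr.
have HR := rect_R Hr.
have Ha : 0 < a <= n.+2 by rewrite -M !inE eqxx.
have Hb : 0 < b <= n.+2 by rewrite -M !inE eqxx orbT.
move: (U) => /= /and3P []; rewrite inE negb_or => /andP [Nab Nar] Nbr Ur.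
case: (eqVneq a 1) => [Ea1|Na1].
  subst a; exists L1, (map (gg 1) (b :: r)).
  have Hp := pm_del H.
  have E : 1 :: map (sh 1) (map (gg 1) (b :: r)) = [:: 1, b & r].
    by rewrite map_sh_gg // inE negb_or Nab.
  have Rp : rectangular (map (gg 1) (b :: r)).
    apply: R_rect; apply: (Rsub HR (mono_sh 1)); rewrite -E; exact: subseq_cons.
  by split => //; rewrite /psi Rp rho1 E.
case: (eqVneq b a.-1) => [Eb|Nb].
  exists Ld, (map (gg a) (b :: r)).
  have Hp := pm_del H.
  have E : map (sh a) (map (gg a) (b :: r)) = b :: r by rewrite map_sh_gg // inE negb_or Nab.
  have Rp : rectangular (map (gg a) (b :: r)).
    apply: R_rect; apply: (Rsub HR (mono_sh a)); rewrite E; exact: subseq_cons.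
  split => //; rewrite /psi Rp /=.
  have -> : gg a b = b by rewrite /gg; case: ltnP; lia.
  rewrite (_ : b.+1 = a); last by lia.
  rewrite rho1 /= map_sh_gg // (_ : sh a b = b) //; rewrite /sh; case: leqP; lia.
case: (eqVneq b 1) => [Eb1|Nb1].
  subst b; exists L2, (map (gg 1) (a :: r)).
  have H' : pm n.+2 [:: 1, a & r] by apply: pm_perm H; exact: perm_swap2.
  have Hp := pm_del H'.
  have E : map (sh 1) (map (gg 1) (a :: r)) = a :: r.
    by rewrite map_sh_gg // inE negb_or eq_sym Na1.
  have Rp : rectangular (map (gg 1) (a :: r)).
    apply: R_rect; apply: (Rsub HR (mono_sh 1)); rewrite E /= eqxx; exact: subseq_cons.
  split => //; rewrite /psi Rp /=.
  have -> : gg 1 a = a.-1 by rewrite /gg; case: ltnP; lia.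
  rewrite (_ : a.-1 != 1); last by apply/eqP; lia.
  rewrite /= rho2; move: E => /= [E1 ->].
  by rewrite (_ : sh 1 a.-1 = a) // /sh; case: leqP; lia.
case: (eqVneq b a.+1) => [Eb|Nb'].
  exists Lu, (map (gg a) (b :: r)).
  have Hp := pm_del H.
  have E : map (sh a) (map (gg a) (b :: r)) = b :: r by rewrite map_sh_gg // inE negb_or Nab.
  have Rp : rectangular (map (gg a) (b :: r)).
    apply: R_rect; apply: (Rsub HR (mono_sh a)); rewrite E; exact: subseq_cons.
  split => //; rewrite /psi Rp /=.
  have -> : gg a b = a by rewrite /gg; case: ltnP; lia.
  rewrite Na1 /= rho1 /= map_sh_gg // (_ : sh a a = b) //; rewrite /sh leqnn; lia.
exfalso.
set c := (minn a b).+1.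
have H1 : 1 \in r.
  have : 1 \in [:: a, b & r] by rewrite M.
  by rewrite !inE eq_sym (negbTE Na1) eq_sym (negbTE Nb1).
have Hc : c \in r.
  have : c \in [:: a, b & r] by rewrite M /c; lia.
  rewrite !inE; case: eqP => [/eqP|_]; first (rewrite /c; lia).
  case: eqP => [/eqP|_] //; rewrite /c; lia.
have H1c : 1 != c by rewrite /c; lia.
have Hab := Nab.
case: (two_subseq H1 Hc H1c) => Hsub.
- have := HR a b 1 c; rewrite /= !eqxx => /(_ Hsub); rewrite /forb /c; lia.
- have := HR a b c 1; rewrite /= !eqxx => /(_ Hsub); rewrite /forb /c; lia.
Qed.

Lemma rect_nil : rectangular [::].
Proof. by []. Qed.

Lemma Inv w p : eval_word w = Some p ->
  [/\ pm (size w) p, rectangular p & rc p = count is_d w].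
Proof.
elim: w p => [|x w IH] p /=.
  case=> <-; split => //; split => // v; rewrite in_nil; lia.
case E: (eval_word w) => [p'|] // H.
have [Hp Hr Hc] := IH _ E.
split.
- exact: pm_psi Hp H.
- exact: rect_psi Hp H.
- by rewrite (rc_psi Hp H) Hc addnC.
Qed.

Lemma word_inj w1 w2 p : eval_word w1 = Some p -> eval_word w2 = Some p ->
  size w1 = size w2 -> w1 = w2.
Proof.
elim: w1 w2 p => [|x w1 IH] [|y w2] p //=.
case E1: (eval_word w1) => [p1|] //; case E2: (eval_word w2) => [p2|] // H1 H2 [Hs].
have [[_ M1] _ _] := Inv E1; have [[_ M2] _ _] := Inv E2.
have N1 : 0 \notin p1 by rewrite M1.
have N2 : 0 \notin p2 by rewrite M2.
have [-> Ep] := psi_inj N1 N2 H1 H2.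
subst p2; by rewrite (IH _ _ E1 E2 Hs).
Qed.

Lemma surj n p : pm n.+1 p -> rectangular p -> exists w, size w = n.+1 /\ eval_word w = Some p.
Proof.
elim: n p => [|n IH] p H Hr.
- exists [:: L1]; split => //.
  have Hs := pm_size H; case: H => U M.
  case: p Hs U M {Hr} => [|v [|? ?]] //= _ _ M.
  have : v \in [:: v] by rewrite inE.
  rewrite M => Hv; rewrite (_ : v = 1); last lia.
  by rewrite /psi rect_nil rho1.
- have [x [p' [Hp' Hr' E]]] := decomp H Hr.
  have [w [Hw Ew]] := IH _ Hp' Hr'.
  exists (x :: w); split; first by rewrite /= Hw.
  by rewrite /= Ew.
Qed.

Theorem corollary4p5 (n k : nat) : 1 <= n ->
  (* maps into the target set *)
  (forall w, in_LRect w -> size w = n -> count is_d w = k ->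
     exists p, eval_word w = Some p /\ is_perm n p /\ rectangular p /\ recoils p = k) /\
  (* injective on the source set *)
  (forall w1 w2, in_LRect w1 -> size w1 = n -> count is_d w1 = k ->
     in_LRect w2 -> size w2 = n -> count is_d w2 = k ->
     eval_word w1 = eval_word w2 -> w1 = w2) /\
  (* surjective onto the target set *)
  (forall p, is_perm n p -> rectangular p -> recoils p = k ->
     exists w, [/\ in_LRect w, size w = n, count is_d w = k & eval_word w = Some p]).
Proof.
move=> Hn; split; [|split].
- move=> w [_ [p E]] Hs Hk; exists p.
  have [Hp Hr Hc] := Inv E; rewrite Hs in Hp.
  split => //; split; first exact/is_permP.
  by split => //; rewrite (recoils_rc Hp) Hc.
- move=> w1 w2 [_ [p E1]] Hs1 _ _ Hs2 _ E.
  apply: (word_inj E1 _ _); [by rewrite -E | by rewrite Hs1 Hs2].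
- case: n Hn => // n _ p /is_permP Hp Hr Hk.
  have [w [Hw Ew]] := surj Hp Hr.
  exists w; split => //.
  + split; [by rewrite Hw | by exists p].
  + have [Hp' _ Hc] := Inv Ew; by rewrite -Hk -Hc (recoils_rc Hp).
Qed.
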